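(* Let $\bowtie$ be a $4\times n$ Latin rectangle with two colors $R,B$. Define the six column types (listed top to bottom) $b_1=(R,R,B,B)^T$, $b_2=(B,B,R,R)^T$, $b_3=(R,B,B,R)^T$, $b_4=(B,R,R,B)^T$, $b_5=(R,B,R,B)^T$, $b_6=(B,R,B,R)^T$, and let $\mu_i$ be the number of columns of $\bowtie$ of type $b_i$. Then $\mu_1=\mu_2$, $\mu_3=\mu_4$, and $\mu_5=\mu_6$.
   Context: A Latin rectangle is an $a\times b$ array of colored nodes such that each color appears the same number of times in every row and each color appears the same number of times in every column. The pairs $(b_1,b_2)$, $(b_3,b_4)$, $(b_5,b_6)$ are color-complementary pairs of columns (each is obtained from the other by swapping $R$ and $B$). *)

(* Defs.v *)
From HB Require Import structures.
From mathcomp Require Import all_boot all_algebra.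
Set Implicit Arguments. Unset Strict Implicit. Unset Printing Implicit Defensive.

Definition latin_rectangle (C : finType) (a b : nat) (M : 'M[C]_(a, b)) : Prop :=
  (forall (i : 'I_a) (c d : C),
      #|[set j : 'I_b | M i j == c]| = #|[set j : 'I_b | M i j == d]|) /\
  (forall (j : 'I_b) (c d : C),
      #|[set i : 'I_a | M i j == c]| = #|[set i : 'I_a | M i j == d]|).

Inductive color := R | B.
Definition color_to_bool (c : color) : bool := if c is R then true else false.
Definition bool_to_color (b : bool) : color := if b then R else B.
Lemma color_boolK : cancel color_to_bool bool_to_color. Proof. by case. Qed.
HB.instance Definition _ := Finite.copy color (can_type color_boolK).

Definition col4 (c0 c1 c2 c3 : color) : 'cV[color]_4 :=
  \col_(i < 4) nth B [:: c0; c1; c2; c3] i.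

Definition b1 := col4 R R B B.
Definition b2 := col4 B B R R.
Definition b3 := col4 R B B R.
Definition b4 := col4 B R R B.
Definition b5 := col4 R B R B.
Definition b6 := col4 B R B R.

Definition mu (n : nat) (M : 'M[color]_(4, n)) (v : 'cV[color]_4) : nat :=
  #|[set j : 'I_n | col j M == v]|.

(* Main.v *)
Require Import Defs.
From mathcomp Require Import all_boot all_algebra.
From mathcomp Require Import zify.
Notation o0 := (@inord 3 0).
Notation o1 := (@inord 3 1).
Notation o2 := (@inord 3 2).
Notation o3 := (@inord 3 3).

Lemma cardP n (P : pred 'I_n) : #|[set j | P j]| = \sum_j (P j : nat).
Proof.
rewrite -sum1_card big_mkcond /=; apply: eq_bigr => j _; rewrite inE.
by case: (P j).
Qed.

Lemma col_eq4 (c : 'cV[color]_4) : c = col4 (c o0 ord0) (c o1 ord0) (c o2 ord0) (c o3 ord0).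
Proof.
apply/matrixP => i j; rewrite (ord1 j) !mxE.
case: i => [[|[|[|[|k]]]] Hi] //=; by congr (c _ _); apply/val_inj; rewrite /= inordK.
Qed.

Lemma col4_eq a b c d a' b' c' d' :
  (col4 a b c d == col4 a' b' c' d') = [&& a==a', b==b', c==c' & d==d'].
Proof.
apply/idP/idP.
  move/eqP/matrixP => H.
  have := H o0 ord0; have := H o1 ord0; have := H o2 ord0; have := H o3 ord0.
  rewrite !mxE /= !inordK //= => -> -> -> ->; by rewrite !eqxx.
by case/and4P => /eqP-> /eqP-> /eqP-> /eqP->.
Qed.

Lemma key (a b c d : color) :
  (a==R)+(b==R)+(c==R)+(d==R) = (a==B)+(b==B)+(c==B)+(d==B) ->
  [/\ (a==R)+(b==R)+((col4 a b c d == b2) + (col4 a b c d == b2)) = (a==B)+(b==B)+((col4 a b c d == b1) + (col4 a b c d == b1)),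
      (a==R)+(c==R)+((col4 a b c d == b6) + (col4 a b c d == b6)) = (a==B)+(c==B)+((col4 a b c d == b5) + (col4 a b c d == b5)) &
      (b==R)+(c==R)+((col4 a b c d == b3) + (col4 a b c d == b3)) = (b==B)+(c==B)+((col4 a b c d == b4) + (col4 a b c d == b4))].
Proof.
rewrite /b1 /b2 /b3 /b4 /b5 /b6 !col4_eq.
by case: a; case: b; case: c; case: d.
Qed.

Theorem lemma9p6 (n : nat) (M : 'M[color]_(4, n)) :
  latin_rectangle M ->
  [/\ mu M b1 = mu M b2, mu M b3 = mu M b4 & mu M b5 = mu M b6].
Proof.
case=> H1 H2.
have E j := key (M o0 j) (M o1 j) (M o2 j) (M o3 j).
have Ec j : col j M = col4 (M o0 j) (M o1 j) (M o2 j) (M o3 j).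
  by rewrite [LHS]col_eq4 !mxE.
have F j : [/\ (M o0 j==R)+(M o1 j==R)+((col j M == b2) + (col j M == b2)) = (M o0 j==B)+(M o1 j==B)+((col j M == b1) + (col j M == b1)),
      (M o0 j==R)+(M o2 j==R)+((col j M == b6) + (col j M == b6)) = (M o0 j==B)+(M o2 j==B)+((col j M == b5) + (col j M == b5)) &
      (M o1 j==R)+(M o2 j==R)+((col j M == b3) + (col j M == b3)) = (M o1 j==B)+(M o2 j==B)+((col j M == b4) + (col j M == b4))].
  rewrite Ec; apply: E.
  have := H2 j R B; rewrite !cardP !big_ord_recl !big_ord0 /= !addn0 !addnA.
  have e0 : (ord0 : 'I_4) = o0 by apply/val_inj; rewrite /= inordK.
  have e1 : (lift ord0 ord0 : 'I_4) = o1 by apply/val_inj; rewrite /= inordK.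
  have e2 : (lift ord0 (lift ord0 ord0) : 'I_4) = o2 by apply/val_inj; rewrite /= inordK.
  have e3 : (lift ord0 (lift ord0 (lift ord0 ord0)) : 'I_4) = o3 by apply/val_inj; rewrite /= inordK.
  by rewrite e3 e2 e1 e0.
have S1 : \sum_j ((M o0 j==R)+(M o1 j==R)+((col j M == b2) + (col j M == b2))) = \sum_j ((M o0 j==B)+(M o1 j==B)+((col j M == b1) + (col j M == b1))).
  by apply: eq_bigr => j _; case: (F j).
have S2 : \sum_j ((M o0 j==R)+(M o2 j==R)+((col j M == b6) + (col j M == b6))) = \sum_j ((M o0 j==B)+(M o2 j==B)+((col j M == b5) + (col j M == b5))).
  by apply: eq_bigr => j _; case: (F j).
have S3 : \sum_j ((M o1 j==R)+(M o2 j==R)+((col j M == b3) + (col j M == b3))) = \sum_j ((M o1 j==B)+(M o2 j==B)+((col j M == b4) + (col j M == b4))).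
  by apply: eq_bigr => j _; case: (F j).
rewrite !big_split /= in S1 S2 S3.
have R0 := H1 o0 R B; have R1 := H1 o1 R B; have R2 := H1 o2 R B.
rewrite !cardP in R0 R1 R2.
rewrite /mu !cardP.
rewrite R0 R1 in S1; rewrite R0 R2 in S2; rewrite R1 R2 in S3.
move/eqP: S1; rewrite -!addnA eqn_add2l eqn_add2l => /eqP S1.
move/eqP: S2; rewrite -!addnA eqn_add2l eqn_add2l => /eqP S2.
move/eqP: S3; rewrite -!addnA eqn_add2l eqn_add2l => /eqP S3.
rewrite !addnn in S1 S2 S3.
move/double_inj: S1 => S1; move/double_inj: S2 => S2; move/double_inj: S3 => S3.
by split.
Qed.
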